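(* Let $G$ be a finite transitive permutation group and let $H,K\le G$ be subgroups such that $H\cup K$ is an intersecting set. Then $HK=\{hk: h\in H, k\in K\}$ is also an intersecting set.
   Context: For a permutation group $G$ on a finite set $V$, a subset $\mathcal{F}\subseteq G$ is intersecting if for all $g,h\in\mathcal{F}$ there is $v\in V$ with $g(v)=h(v)$. *)

(* Defs.v *)
From mathcomp Require Import all_boot all_fingroup.
Set Implicit Arguments. Unset Strict Implicit. Unset Printing Implicit Defensive.
Import GroupScope.

Definition intersecting (V : finType) (F : {set {perm V}}) : Prop :=
  forall g h, g \in F -> h \in F -> exists v : V, g v = h v.

(* Main.v *)
Require Import Defs.
From mathcomp Require Import all_boot all_fingroup.
Import GroupScope.

Theorem lemma5p1 (V : finType) (G H K : {group {perm V}}) :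
  [transitive G, on [set: V] | 'P] ->
  H \subset G -> K \subset G ->
  intersecting (H :|: K) ->
  intersecting (H * K).
Proof.
move=> _ _ _ hI g1 g2 /mulsgP[h1 k1 Hh1 Hk1 ->] /mulsgP[h2 k2 Hh2 Hk2 ->].
have m1 : h1^-1 * h2 \in H :|: K by apply/setUP; left; rewrite groupM ?groupV.
have m2 : k1 * k2^-1 \in H :|: K by apply/setUP; right; rewrite groupM ?groupV.
have [u Hu] := hI _ _ m1 m2.
exists (h1^-1 u).
rewrite !permM permKV.
move: Hu; rewrite !permM => ->.
by rewrite permKV.
Qed.
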